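(* Let $K\subseteq\mathbb{R}^d$ be compact, let $f:K\to\mathbb{R}$ and $F:K\to\mathbb{R}^d$ be continuous, and let $\gamma:[a,b]\to K$ be a rectifiable path. Suppose that for all but finitely many points $x\in\gamma([a,b])$ one has $\lim_{y\to x,\,y\in K\setminus\{x\}}\frac{f(y)-f(x)-\langle F(x),y-x\rangle}{|y-x|}=0$. Then $\int_\gamma F=f(\gamma(b))-f(\gamma(a))$.
   Context: A path $\gamma:[a,b]\to K$ is a continuous map; its length is $L(\gamma)=\sup\{\sum_{j=1}^n|\gamma(t_j)-\gamma(t_{j-1})|: a=t_0<\dots<t_n=b\}$, and $\gamma$ is rectifiable if $L(\gamma)<\infty$. For continuous $F:K\to\mathbb{R}^d$ and rectifiable $\gamma$, the path integral $\int_\gamma F$ is the limit of the Riemann–Stieltjes sums $\sum_{j=1}^n\langle F(\gamma(\tau_j)),\gamma(t_j)-\gamma(t_{j-1})\rangle$ over partitions $a=t_0<\dots<t_n=b$ with mesh tending to $0$ and $t_{j-1}\le\tau_j\le t_j$. *)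

(* Defs.v *)
From Stdlib Require Import Reals Lra List.
Open Scope R_scope.

(* Points of R^d are represented as functions nat -> R; a point of R^d is one
   that vanishes at all indices >= d. *)
Definition vec := nat -> R.

Definition in_Rd (d : nat) (x : vec) : Prop := forall i, (d <= i)%nat -> x i = 0.

Fixpoint rsum (n : nat) (g : nat -> R) : R :=
  match n with
  | O => 0
  | S m => rsum m g + g m
  end.

Definition vsub (u v : vec) : vec := fun i => u i - v i.

Definition dot (d : nat) (u v : vec) : R := rsum d (fun i => u i * v i).
Definition vnorm (d : nat) (u : vec) : R := sqrt (dot d u u).

(* Compactness of a subset of R^d (sequential compactness, equivalent in metric spaces). *)
Definition compact_set (d : nat) (K : vec -> Prop) : Prop :=
  forall u : nat -> vec, (forall n, K (u n)) ->
  exists (phi : nat -> nat) (l : vec),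
    (forall n, (phi n < phi (S n))%nat) /\ K l /\
    forall eps, 0 < eps -> exists N, forall n, (N <= n)%nat ->
      vnorm d (vsub (u (phi n)) l) < eps.

Definition cont_on_scalar (d : nat) (K : vec -> Prop) (f : vec -> R) : Prop :=
  forall x, K x -> forall eps, 0 < eps -> exists delta, 0 < delta /\
    forall y, K y -> vnorm d (vsub y x) < delta -> Rabs (f y - f x) < eps.

Definition cont_on_vec (d : nat) (K : vec -> Prop) (F : vec -> vec) : Prop :=
  forall x, K x -> forall eps, 0 < eps -> exists delta, 0 < delta /\
    forall y, K y -> vnorm d (vsub y x) < delta -> vnorm d (vsub (F y) (F x)) < eps.

Definition is_path (d : nat) (K : vec -> Prop) (gamma : R -> vec) (a b : R) : Prop :=
  (forall t, a <= t <= b -> K (gamma t)) /\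
  forall t, a <= t <= b -> forall eps, 0 < eps -> exists delta, 0 < delta /\
    forall s, a <= s <= b -> Rabs (s - t) < delta ->
      vnorm d (vsub (gamma s) (gamma t)) < eps.

Definition is_partition (a b : R) (n : nat) (t : nat -> R) : Prop :=
  (1 <= n)%nat /\ t O = a /\ t n = b /\ forall j, (j < n)%nat -> t j < t (S j).

Definition poly_sum (d : nat) (gamma : R -> vec) (n : nat) (t : nat -> R) : R :=
  rsum n (fun j => vnorm d (vsub (gamma (t (S j))) (gamma (t j)))).

Definition rectifiable (d : nat) (gamma : R -> vec) (a b : R) : Prop :=
  exists M, forall n t, is_partition a b n t -> poly_sum d gamma n t <= M.

(* Riemann--Stieltjes sum with tags tau_j in [t_{j-1}, t_j], j = 1..n
   (here indexed j = 0..n-1 with tau j in [t j, t (S j)]). *)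
Definition rs_sum (d : nat) (F : vec -> vec) (gamma : R -> vec)
  (n : nat) (t tau : nat -> R) : R :=
  rsum n (fun j => dot d (F (gamma (tau j))) (vsub (gamma (t (S j))) (gamma (t j)))).

Definition path_integral_is (d : nat) (F : vec -> vec) (gamma : R -> vec)
  (a b : R) (I : R) : Prop :=
  forall eps, 0 < eps -> exists delta, 0 < delta /\
    forall n t tau, is_partition a b n t ->
      (forall j, (j < n)%nat -> t (S j) - t j < delta) ->
      (forall j, (j < n)%nat -> t j <= tau j <= t (S j)) ->
      Rabs (rs_sum d F gamma n t tau - I) < eps.

Definition strong_deriv_at (d : nat) (K : vec -> Prop) (f : vec -> R) (F : vec -> vec)
  (x : vec) : Prop :=
  forall eps, 0 < eps -> exists delta, 0 < delta /\
    forall y, K y -> 0 < vnorm d (vsub y x) < delta ->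
      Rabs ((f y - f x - dot d (F x) (vsub y x)) / vnorm d (vsub y x)) < eps.

(* Main.v *)
Require Import Defs.
From Stdlib Require Import Reals Lra Lia List Classical FunctionalExtensionality.
Open Scope R_scope.

Lemma rsum_ext n g h : (forall i, (i<n)%nat -> g i = h i) -> rsum n g = rsum n h.
Proof. induction n; simpl; intros H; [reflexivity|]. rewrite IHn by (intros; apply H; lia). rewrite H by lia. reflexivity. Qed.

Lemma rsum_plus n g h : rsum n (fun i => g i + h i) = rsum n g + rsum n h.
Proof. induction n; simpl; [lra|]. rewrite IHn; lra. Qed.

Lemma rsum_minus n g h : rsum n (fun i => g i - h i) = rsum n g - rsum n h.
Proof. induction n; simpl; [lra|]. rewrite IHn; lra. Qed.

Lemma rsum_scal n c g : rsum n (fun i => c * g i) = c * rsum n g.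
Proof. induction n; simpl; [lra|]. rewrite IHn; lra. Qed.

Lemma rsum_const n c : rsum n (fun _ => c) = INR n * c.
Proof. induction n; simpl rsum; [simpl; lra|]. rewrite IHn, S_INR; lra. Qed.

Lemma rsum_le n g h : (forall i, (i<n)%nat -> g i <= h i) -> rsum n g <= rsum n h.
Proof. induction n; simpl; intros H; [lra|]. specialize (IHn (fun i Hi => H i ltac:(lia))). specialize (H n ltac:(lia)). lra. Qed.

Lemma rsum_nonneg n g : (forall i, (i<n)%nat -> 0 <= g i) -> 0 <= rsum n g.
Proof. intros H. replace 0 with (rsum n (fun _ => 0)). apply rsum_le; auto. rewrite rsum_const; lra. Qed.

Lemma rsum_abs n g : Rabs (rsum n g) <= rsum n (fun i => Rabs (g i)).
Proof. induction n; simpl; [rewrite Rabs_R0; lra|]. eapply Rle_trans; [apply Rabs_triang|]. lra. Qed.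

Lemma rsum_split n1 n2 g : rsum (n1+n2) g = rsum n1 g + rsum n2 (fun k => g (n1+k)%nat).
Proof. induction n2; simpl. rewrite Nat.add_0_r; lra. rewrite Nat.add_succ_r; simpl. rewrite IHn2; lra. Qed.

Lemma rsum_telescope n (x : nat -> R) : rsum n (fun k => x (S k) - x k) = x n - x O.
Proof. induction n; simpl; [lra|]. rewrite IHn; lra. Qed.

Lemma rsum_term_le n g i : (forall j, (j<n)%nat -> 0 <= g j) -> (i<n)%nat -> g i <= rsum n g.
Proof. induction n; intros H Hi; [lia|]. simpl. assert (0 <= rsum n g) by (apply rsum_nonneg; intros; apply H; lia).
 destruct (Nat.eq_dec i n). subst; lra. specialize (IHn (fun j Hj => H j ltac:(lia)) ltac:(lia)). specialize (H n ltac:(lia)); lra. Qed.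

Definition norm1 d (u : vec) := rsum d (fun i => Rabs (u i)).

Lemma dot_vsub d w x y : dot d w (vsub x y) = dot d w x - dot d w y.
Proof. unfold dot, vsub. rewrite <- rsum_minus. apply rsum_ext; intros; ring. Qed.

Lemma dot_nonneg d u : 0 <= dot d u u.
Proof. apply rsum_nonneg. intros; nra. Qed.

Lemma vnorm_nonneg d u : 0 <= vnorm d u.
Proof. apply sqrt_pos. Qed.

Lemma coord_le_vnorm d u i : (i<d)%nat -> Rabs (u i) <= vnorm d u.
Proof. intros Hi. rewrite <- sqrt_Rsqr_abs. apply sqrt_le_1_alt. unfold Rsqr.
 apply (rsum_term_le d (fun i => u i * u i)); auto. intros; nra. Qed.

Lemma dot_le_norm1 d u v : Rabs (dot d u v) <= norm1 d u * vnorm d v.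
Proof. unfold dot, norm1. eapply Rle_trans; [apply rsum_abs|]. rewrite Rmult_comm, <- rsum_scal.
 apply rsum_le. intros i Hi. rewrite Rabs_mult. pose proof (coord_le_vnorm d v i Hi). pose proof (Rabs_pos (u i)). nra. Qed.

Lemma norm1_le d u : norm1 d u <= INR d * vnorm d u.
Proof. rewrite <- rsum_const. apply rsum_le. intros; apply coord_le_vnorm; auto. Qed.

Lemma norm1_nonneg d u : 0 <= norm1 d u.
Proof. apply rsum_nonneg; intros; apply Rabs_pos. Qed.

Lemma norm1_triangle d x y z : norm1 d (vsub x z) <= norm1 d (vsub x y) + norm1 d (vsub y z).
Proof. unfold norm1, vsub. rewrite <- rsum_plus. apply rsum_le; intros.
 replace (x i - z i) with ((x i - y i) + (y i - z i)) by ring. apply Rabs_triang. Qed.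

Lemma norm1_sym d x y : norm1 d (vsub x y) = norm1 d (vsub y x).
Proof. unfold norm1, vsub. apply rsum_ext; intros. rewrite <- Rabs_Ropp. f_equal; ring. Qed.

Lemma vnorm_sym d x y : vnorm d (vsub x y) = vnorm d (vsub y x).
Proof. unfold vnorm, dot, vsub. f_equal. apply rsum_ext; intros; ring. Qed.

Lemma vnorm0_coords d u : vnorm d u = 0 -> forall i, (i<d)%nat -> u i = 0.
Proof. intros H i Hi. pose proof (coord_le_vnorm d u i Hi). rewrite H in H0.
 pose proof (Rabs_pos (u i)). destruct (Req_dec (u i) 0); auto. pose proof (Rabs_no_R0 _ H2). lra. Qed.

Lemma dot_zero_right d w v : (forall i, (i<d)%nat -> v i = 0) -> dot d w v = 0.
Proof. intros H. unfold dot. rewrite (rsum_ext _ _ (fun _ => 0)). rewrite rsum_const; lra. intros; rewrite H; auto; ring. Qed.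

Lemma vnorm_small_norm1 d u eps : 0 < eps -> vnorm d u < eps / (INR d + 1) -> norm1 d u < eps.
Proof. intros He H. pose proof (norm1_le d u). pose proof (pos_INR d). pose proof (vnorm_nonneg d u).
 apply (Rmult_lt_compat_l (INR d + 1)) in H; [|lra]. field_simplify in H; [|lra]. nra. Qed.

Definition TP (u v : R) n (t tau : nat -> R) := t O = u /\ t n = v /\
  (forall j, (j<n)%nat -> t j < t (S j)) /\ (forall j, (j<n)%nat -> t j <= tau j <= t (S j)).
Definition fine eta n (t : nat -> R) := forall j, (j<n)%nat -> t (S j) - t j < eta.
Definition Good d (f : vec -> R) F gamma e1 eta s u v := exists n t tau, TP u v n t tau /\ fine eta n t /\
  Rabs (rs_sum d F gamma n t tau - (f (gamma v) - f (gamma u))) <= e1 * poly_sum d gamma n t + s.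

Lemma TP_mono u v n t tau : TP u v n t tau -> forall j k, (j <= k <= n)%nat -> t j <= t k.
Proof. intros (H0&H1&H2&H3) j k Hjk. replace k with (j + (k-j))%nat by lia.
 remember (k - j)%nat as m. assert (j + m <= n)%nat by lia. clear Heqm Hjk. induction m. rewrite Nat.add_0_r; lra.
 rewrite Nat.add_succ_r. specialize (H2 (j+m)%nat ltac:(lia)). specialize (IHm ltac:(lia)). lra. Qed.

Lemma TP_range u v n t tau : TP u v n t tau -> forall j, (j <= n)%nat -> u <= t j <= v.
Proof. intros H j Hj. pose proof (TP_mono _ _ _ _ _ H) as Hm. destruct H as (H0&H1&_).
 split. rewrite <- H0. apply Hm; lia. rewrite <- H1. apply Hm; lia. Qed.

Lemma TP_tag_range u v n t tau : TP u v n t tau -> forall j, (j < n)%nat -> u <= tau j <= v.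
Proof. intros H j Hj. pose proof (TP_range _ _ _ _ _ H j ltac:(lia)). pose proof (TP_range _ _ _ _ _ H (S j) ltac:(lia)).
 destruct H as (_&_&_&H). specialize (H j Hj). lra. Qed.

Lemma TP_le u v n t tau : TP u v n t tau -> u <= v.
Proof. intros H. pose proof (TP_range _ _ _ _ _ H O ltac:(lia)). lra. Qed.

Lemma poly_sum_nonneg d gamma n t : 0 <= poly_sum d gamma n t.
Proof. apply rsum_nonneg; intros; apply vnorm_nonneg. Qed.

Lemma Good_weaken d f F gamma e1 eta s s' u v : s <= s' -> Good d f F gamma e1 eta s u v -> Good d f F gamma e1 eta s' u v.
Proof. intros Hs (n&t&tau&H1&H2&H3). exists n, t, tau. split; [auto|split; [auto|lra]]. Qed.

Lemma Good_refl d f F gamma e1 eta s u : 0 <= s -> Good d f F gamma e1 eta s u u.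
Proof. intros Hs. exists O, (fun _ => u), (fun _ => u). split; [|split].
 - repeat split; intros; lia.
 - intros j Hj; lia.
 - unfold rs_sum, poly_sum; simpl. rewrite Rminus_diag, Rminus_0_r, Rabs_R0. lra. Qed.

Lemma Good_single d f F gamma e1 eta s u v tau : u < v -> v - u < eta -> u <= tau <= v ->
  Rabs (dot d (F (gamma tau)) (vsub (gamma v) (gamma u)) - (f (gamma v) - f (gamma u))) <= e1 * vnorm d (vsub (gamma v) (gamma u)) + s ->
  Good d f F gamma e1 eta s u v.
Proof. intros Huv Heta Ht H. exists 1%nat, (fun k => match k with O => u | _ => v end), (fun _ => tau).
 unfold TP, fine, rs_sum, poly_sum; simpl. repeat split; intros; try (assert (j = O) by lia; subst; simpl; lra).
 rewrite !Rplus_0_l. exact H. Qed.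

Definition cat_t n1 (t1 t2 : nat -> R) k := if (k <=? n1)%nat then t1 k else t2 (k - n1)%nat.
Definition cat_tau n1 (t1 t2 : nat -> R) k := if (k <? n1)%nat then t1 k else t2 (k - n1)%nat.

Lemma cat_t_lo n1 t1 t2 k : (k <= n1)%nat -> cat_t n1 t1 t2 k = t1 k.
Proof. intros; unfold cat_t. destruct (Nat.leb_spec k n1); [auto|lia]. Qed.
Lemma cat_t_hi n1 t1 t2 k : t1 n1 = t2 O -> cat_t n1 t1 t2 (n1 + k) = t2 k.
Proof. intros H; unfold cat_t. destruct (Nat.leb_spec (n1+k) n1). assert (k = O) by lia; subst. rewrite Nat.add_0_r; auto.
 f_equal; lia. Qed.
Lemma cat_tau_lo n1 t1 t2 k : (k < n1)%nat -> cat_tau n1 t1 t2 k = t1 k.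
Proof. intros; unfold cat_tau. destruct (Nat.ltb_spec k n1); [auto|lia]. Qed.
Lemma cat_tau_hi n1 t1 t2 k : cat_tau n1 t1 t2 (n1 + k) = t2 k.
Proof. unfold cat_tau. destruct (Nat.ltb_spec (n1+k) n1). lia. f_equal; lia. Qed.

Lemma TP_cat u v w n1 t1 tau1 n2 t2 tau2 : TP u v n1 t1 tau1 -> TP v w n2 t2 tau2 ->
  TP u w (n1+n2) (cat_t n1 t1 t2) (cat_tau n1 tau1 tau2).
Proof. intros (A0&A1&A2&A3) (B0&B1&B2&B3). assert (E : t1 n1 = t2 O) by congruence.
 split; [rewrite cat_t_lo by lia; auto|]. split; [rewrite cat_t_hi; auto|].
 split; intros j Hj; (destruct (Nat.lt_ge_cases j n1) as [Hl|Hl];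
   [rewrite !cat_t_lo by lia; try rewrite cat_tau_lo by lia; auto
   | replace j with (n1 + (j - n1))%nat by lia; replace (S (n1 + (j - n1))) with (n1 + S (j - n1))%nat by lia;
     rewrite !cat_t_hi by auto; try rewrite cat_tau_hi; (apply B2 || apply B3); lia]). Qed.

Lemma Good_cat d f F gamma e1 eta s1 s2 u v w : Good d f F gamma e1 eta s1 u v -> Good d f F gamma e1 eta s2 v w ->
  Good d f F gamma e1 eta (s1 + s2) u w.
Proof. intros (n1&t1&tau1&A1&A2&A3) (n2&t2&tau2&B1&B2&B3).
 assert (E : t1 n1 = t2 O) by (destruct A1 as (_&X&_); destruct B1 as (Y&_); congruence).
 exists (n1+n2)%nat, (cat_t n1 t1 t2), (cat_tau n1 tau1 tau2). split; [eapply TP_cat; eauto|].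
 split. intros j Hj. destruct (Nat.lt_ge_cases j n1) as [Hl|Hl].
 rewrite !cat_t_lo by lia; apply A2; auto.
 replace j with (n1 + (j - n1))%nat by lia; replace (S (n1 + (j - n1))) with (n1 + S (j - n1))%nat by lia;
 rewrite !cat_t_hi by auto; apply B2; lia.
 unfold rs_sum, poly_sum in *. rewrite !rsum_split.
 rewrite (rsum_ext n1 (fun j => dot d (F (gamma (cat_tau n1 tau1 tau2 j))) (vsub (gamma (cat_t n1 t1 t2 (S j))) (gamma (cat_t n1 t1 t2 j)))) (fun j => dot d (F (gamma (tau1 j))) (vsub (gamma (t1 (S j))) (gamma (t1 j))))).
 rewrite (rsum_ext n2 (fun k => dot d (F (gamma (cat_tau n1 tau1 tau2 (n1+k)))) (vsub (gamma (cat_t n1 t1 t2 (S (n1+k)))) (gamma (cat_t n1 t1 t2 (n1+k))))) (fun j => dot d (F (gamma (tau2 j))) (vsub (gamma (t2 (S j))) (gamma (t2 j))))).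
 rewrite (rsum_ext n1 (fun j => vnorm d (vsub (gamma (cat_t n1 t1 t2 (S j))) (gamma (cat_t n1 t1 t2 j)))) (fun j => vnorm d (vsub (gamma (t1 (S j))) (gamma (t1 j))))).
 rewrite (rsum_ext n2 (fun k => vnorm d (vsub (gamma (cat_t n1 t1 t2 (S (n1+k)))) (gamma (cat_t n1 t1 t2 (n1+k))))) (fun j => vnorm d (vsub (gamma (t2 (S j))) (gamma (t2 j))))).
 match goal with |- Rabs ?X <= _ => replace X with ((rsum n1 (fun j => dot d (F (gamma (tau1 j))) (vsub (gamma (t1 (S j))) (gamma (t1 j)))) - (f (gamma v) - f (gamma u))) + (rsum n2 (fun j => dot d (F (gamma (tau2 j))) (vsub (gamma (t2 (S j))) (gamma (t2 j)))) - (f (gamma w) - f (gamma v)))) by ring end.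
 eapply Rle_trans; [apply Rabs_triang|]. lra.
 all: intros j Hj.
 all: try (replace (S (n1 + j)) with (n1 + S j)%nat by lia; rewrite !cat_t_hi by auto; try rewrite cat_tau_hi; reflexivity).
 all: rewrite !cat_t_lo by lia; try rewrite cat_tau_lo by lia; reflexivity. Qed.

Definition Hyp d K (f : vec -> R) F gamma a b := (forall x, K x -> in_Rd d x) /\ cont_on_scalar d K f /\
  cont_on_vec d K F /\ is_path d K gamma a b.

Lemma g_cont d K f F gamma a b x : Hyp d K f F gamma a b -> a <= x <= b -> forall eps, 0 < eps ->
  exists r, 0 < r /\ forall z, a <= z <= b -> Rabs (z - x) < r -> Rabs (f (gamma z) - f (gamma x)) < eps.
Proof. intros (HK&Hf&HF&HP1&HP2) Hx eps He. destruct (Hf (gamma x) (HP1 x Hx) eps He) as (r1&Hr1&H1).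
 destruct (HP2 x Hx r1 Hr1) as (r&Hr&H2). exists r; split; [auto|]. intros z Hz Hzx. apply H1; auto. Qed.

Lemma gam_cont d K f F gamma a b x : Hyp d K f F gamma a b -> a <= x <= b -> forall eps, 0 < eps ->
  exists r, 0 < r /\ forall z, a <= z <= b -> Rabs (z - x) < r -> vnorm d (vsub (gamma z) (gamma x)) < eps.
Proof. intros (HK&Hf&HF&HP1&HP2) Hx eps He. apply HP2; auto. Qed.

Lemma Fg_cont d K f F gamma a b x : Hyp d K f F gamma a b -> a <= x <= b -> forall eps, 0 < eps ->
  exists r, 0 < r /\ forall z, a <= z <= b -> Rabs (z - x) < r -> norm1 d (vsub (F (gamma z)) (F (gamma x))) < eps.
Proof. intros (HK&Hf&HF&HP1&HP2) Hx eps He. pose proof (pos_INR d).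
 destruct (HF (gamma x) (HP1 x Hx) (eps / (INR d + 1))) as (r1&Hr1&H1). apply Rdiv_lt_0_compat; lra.
 destruct (HP2 x Hx r1 Hr1) as (r&Hr&H2). exists r; split; [auto|]. intros z Hz Hzx. apply vnorm_small_norm1; auto. Qed.

Lemma diff_bound d K f F gamma a b x : Hyp d K f F gamma a b -> a <= x <= b -> strong_deriv_at d K f F (gamma x) ->
  forall e1, 0 < e1 -> exists r, 0 < r /\ forall z, a <= z <= b -> Rabs (z - x) < r ->
  Rabs (f (gamma z) - f (gamma x) - dot d (F (gamma x)) (vsub (gamma z) (gamma x))) <= e1 * vnorm d (vsub (gamma z) (gamma x)).
Proof. intros HH Hx HD e1 He. pose proof HH as (HK&Hf&HF&HP1&HP2). destruct (HD e1 He) as (rho&Hrho&H1).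
 destruct (HP2 x Hx rho Hrho) as (r&Hr&H2). exists r; split; [auto|]. intros z Hz Hzx.
 pose proof (vnorm_nonneg d (vsub (gamma z) (gamma x))). destruct (Req_dec (vnorm d (vsub (gamma z) (gamma x))) 0) as [E|E].
 - assert (Eq : gamma z = gamma x). { apply functional_extensionality; intros i.
     destruct (Nat.lt_ge_cases i d). pose proof (vnorm0_coords _ _ E i H0) as Hc. unfold vsub in Hc. lra.
     rewrite (HK _ (HP1 z Hz) i H0), (HK _ (HP1 x Hx) i H0); auto. }
   rewrite E, Eq, dot_zero_right. replace (f (gamma x) - f (gamma x) - 0) with 0 by ring. rewrite Rabs_R0; lra.
   intros; unfold vsub; ring.
 - specialize (H1 (gamma z) (HP1 z Hz) ltac:(split; [lra|apply H2; auto])).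
   unfold Rdiv in H1. rewrite Rabs_mult, Rabs_inv, (Rabs_pos_eq (vnorm _ _)) in H1 by lra.
   apply (Rmult_lt_compat_r (vnorm d (vsub (gamma z) (gamma x)))) in H1; [|lra].
   rewrite Rmult_assoc, Rinv_l in H1 by lra. lra. Qed.

Lemma real_ind (lo hi : R) (P : R -> Prop) : lo <= hi -> P lo ->
  (forall x, lo <= x < hi -> P x -> exists y, x < y /\ forall z, x <= z <= y -> z <= hi -> P z) ->
  (forall x, lo < x <= hi -> (forall z, lo <= z < x -> P z) -> P x) -> P hi.
Proof. intros Hle H0 Hstep Hclo.
 set (S := fun x => lo <= x <= hi /\ forall z, lo <= z <= x -> P z).
 assert (Sb : bound S) by (exists hi; intros x (Hx&_); lra).
 assert (Sl : S lo). { split; [lra|]. intros z Hz; replace z with lo by lra; auto. }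
 destruct (completeness S Sb (ex_intro _ lo Sl)) as (m&Hub&Hlub).
 assert (Hm1 : lo <= m) by (apply Hub; auto).
 assert (Hm2 : m <= hi) by (apply Hlub; intros x (Hx&_); lra).
 assert (Hbelow : forall z, lo <= z < m -> P z).
 { intros z Hz. destruct (classic (exists x, S x /\ z < x)) as [(x&(Hx1&Hx2)&Hzx)|Hn].
   apply Hx2; lra. exfalso. assert (m <= z); [|lra]. apply Hlub. intros x Sx.
   destruct (Rle_lt_dec x z); auto. exfalso; apply Hn; eauto. }
 assert (Pm : P m). { destruct (Req_dec m lo). subst; auto. apply Hclo; auto; lra. }
 destruct (Req_dec m hi) as [E|E]. subst; auto.
 destruct (Hstep m ltac:(lra) Pm) as (y&Hy&Hy2).
 assert (S (Rmin y hi)). { split. split; [apply Rmin_glb; lra|apply Rmin_r].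
   intros z Hz. destruct (Rlt_le_dec z m). apply Hbelow; lra. apply Hy2. split; [lra|]. pose proof (Rmin_l y hi); lra.
   pose proof (Rmin_r y hi); lra. }
 apply Hub in H. exfalso. unfold Rmin in H; destruct (Rle_dec y hi); lra. Qed.

Lemma err_right d (f : vec -> R) (F : vec -> vec) (gamma : R -> vec) x z e1 :
  Rabs (f (gamma z) - f (gamma x) - dot d (F (gamma x)) (vsub (gamma z) (gamma x))) <= e1 * vnorm d (vsub (gamma z) (gamma x)) ->
  Rabs (dot d (F (gamma x)) (vsub (gamma z) (gamma x)) - (f (gamma z) - f (gamma x))) <= e1 * vnorm d (vsub (gamma z) (gamma x)) + 0.
Proof. intros H. rewrite Rabs_minus_sym. lra. Qed.

Lemma err_left d (f : vec -> R) (F : vec -> vec) (gamma : R -> vec) x z e1 :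
  Rabs (f (gamma z) - f (gamma x) - dot d (F (gamma x)) (vsub (gamma z) (gamma x))) <= e1 * vnorm d (vsub (gamma z) (gamma x)) ->
  Rabs (dot d (F (gamma x)) (vsub (gamma x) (gamma z)) - (f (gamma x) - f (gamma z))) <= e1 * vnorm d (vsub (gamma x) (gamma z)) + 0.
Proof. intros H. rewrite vnorm_sym, !dot_vsub. rewrite dot_vsub in H.
 replace (dot d (F (gamma x)) (gamma x) - dot d (F (gamma x)) (gamma z) - (f (gamma x) - f (gamma z)))
   with (f (gamma z) - f (gamma x) - (dot d (F (gamma x)) (gamma z) - dot d (F (gamma x)) (gamma x))) by ring. lra. Qed.

Lemma inner d K f F gamma a b lo hi e1 eta : Hyp d K f F gamma a b -> a <= lo -> lo <= hi -> hi <= b ->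
  (forall t, lo <= t <= hi -> strong_deriv_at d K f F (gamma t)) -> 0 < e1 -> 0 < eta ->
  Good d f F gamma e1 eta 0 lo hi.
Proof. intros HH Ha Hlh Hb HD He1 Heta.
 apply (real_ind lo hi (fun x => Good d f F gamma e1 eta 0 lo x)); auto.
 - apply Good_refl; lra.
 - intros x Hx Px. destruct (diff_bound d K f F gamma a b x HH ltac:(lra) (HD x ltac:(lra)) e1 He1) as (r&Hr&Hb2).
   exists (x + Rmin r eta / 2). pose proof (Rmin_l r eta). pose proof (Rmin_r r eta). pose proof (Rmin_glb_lt r eta 0 Hr Heta).
   split; [lra|]. intros z Hz Hzh. destruct (Req_dec z x). subst; auto.
   replace 0 with (0+0) by lra. apply (Good_cat _ _ _ _ _ _ _ _ _ x); auto.
   apply (Good_single _ _ _ _ _ _ _ _ _ x); try lra. apply err_right. apply Hb2. lra. rewrite Rabs_pos_eq; lra.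
 - intros x Hx Hbel. destruct (diff_bound d K f F gamma a b x HH ltac:(lra) (HD x ltac:(lra)) e1 He1) as (r&Hr&Hb2).
   pose proof (Rmin_l r eta). pose proof (Rmin_r r eta). pose proof (Rmin_glb_lt r eta 0 Hr Heta).
   set (z := Rmax lo (x - Rmin r eta / 2)). assert (lo <= z < x). { unfold z. split. apply Rmax_l. apply Rmax_lub_lt; lra. }
   assert (x - z <= Rmin r eta / 2). { unfold z. pose proof (Rmax_r lo (x - Rmin r eta / 2)). lra. }
   replace 0 with (0+0) by lra. apply (Good_cat _ _ _ _ _ _ _ _ _ z); auto.
   apply (Good_single _ _ _ _ _ _ _ _ _ x); try lra. apply err_left. apply Hb2. lra. rewrite Rabs_left; lra.
Qed.

Lemma end_err d K f F gamma a b x : Hyp d K f F gamma a b -> a <= x <= b -> forall s, 0 < s ->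
  exists r, 0 < r /\ forall z, a <= z <= b -> Rabs (z - x) < r ->
   Rabs (dot d (F (gamma x)) (vsub (gamma z) (gamma x)) - (f (gamma z) - f (gamma x))) <= s /\
   Rabs (dot d (F (gamma x)) (vsub (gamma x) (gamma z)) - (f (gamma x) - f (gamma z))) <= s.
Proof. intros HH Hx s Hs. set (M := norm1 d (F (gamma x)) + 1). pose proof (norm1_nonneg d (F (gamma x))).
 assert (HM : 0 < M) by (unfold M; lra).
 destruct (gam_cont d K f F gamma a b x HH Hx (s / (2*M))) as (r1&Hr1&H1). apply Rdiv_lt_0_compat; lra.
 destruct (g_cont d K f F gamma a b x HH Hx (s / 2)) as (r2&Hr2&H2). lra.
 exists (Rmin r1 r2). split. apply Rmin_glb_lt; auto. intros z Hz Hzx.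
 pose proof (Rmin_l r1 r2). pose proof (Rmin_r r1 r2).
 specialize (H1 z Hz ltac:(lra)). specialize (H2 z Hz ltac:(lra)).
 assert (A : Rabs (dot d (F (gamma x)) (vsub (gamma z) (gamma x)) - (f (gamma z) - f (gamma x))) <= s).
 { eapply Rle_trans; [apply Rabs_triang|]. rewrite Rabs_Ropp. pose proof (dot_le_norm1 d (F (gamma x)) (vsub (gamma z) (gamma x))).
   pose proof (vnorm_nonneg d (vsub (gamma z) (gamma x))).
   assert (Q : norm1 d (F (gamma x)) * vnorm d (vsub (gamma z) (gamma x)) <= M * (s / (2*M))).
   { apply Rmult_le_compat; auto; [unfold M; lra|lra]. }
   replace (M * (s / (2*M))) with (s/2) in Q by (field; lra). lra. }
 split; auto. rewrite !dot_vsub in *. rewrite <- Rabs_Ropp.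
 match goal with |- Rabs ?X <= _ => match type of A with Rabs ?Y <= _ => replace X with Y by ring end end. auto. Qed.

Lemma base d K f F gamma a b c dd : Hyp d K f F gamma a b -> a <= c -> c < dd -> dd <= b ->
  (forall t, c < t < dd -> strong_deriv_at d K f F (gamma t)) ->
  forall e1 eta s, 0 < e1 -> 0 < eta -> 0 < s -> Good d f F gamma e1 eta s c dd.
Proof. intros HH Ha Hcd Hb HD e1 eta s He1 Heta Hs.
 destruct (end_err d K f F gamma a b c HH ltac:(lra) (s/2) ltac:(lra)) as (r1&Hr1&H1).
 destruct (end_err d K f F gamma a b dd HH ltac:(lra) (s/2) ltac:(lra)) as (r2&Hr2&H2).
 set (m1 := Rmin r1 (Rmin eta (dd - c))). set (m2 := Rmin r2 (Rmin eta (dd - c))).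
 assert (0 < m1) by (unfold m1; repeat apply Rmin_glb_lt; lra).
 assert (0 < m2) by (unfold m2; repeat apply Rmin_glb_lt; lra).
 assert (m1 <= r1 /\ m1 <= eta /\ m1 <= dd - c) by (unfold m1; pose proof (Rmin_l r1 (Rmin eta (dd - c))); pose proof (Rmin_r r1 (Rmin eta (dd - c))); pose proof (Rmin_l eta (dd - c)); pose proof (Rmin_r eta (dd - c)); lra).
 assert (m2 <= r2 /\ m2 <= eta /\ m2 <= dd - c) by (unfold m2; pose proof (Rmin_l r2 (Rmin eta (dd - c))); pose proof (Rmin_r r2 (Rmin eta (dd - c))); pose proof (Rmin_l eta (dd - c)); pose proof (Rmin_r eta (dd - c)); lra).
 apply (Good_weaken _ _ _ _ _ _ (s/2 + 0 + s/2)); [lra|].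
 apply (Good_cat _ _ _ _ _ _ _ _ _ (dd - m2/3)).
 apply (Good_cat _ _ _ _ _ _ _ _ _ (c + m1/3)).
 - apply (Good_single _ _ _ _ _ _ _ _ _ c); try lra. pose proof (vnorm_nonneg d (vsub (gamma (c + m1/3)) (gamma c))).
   assert (0 <= e1 * vnorm d (vsub (gamma (c + m1 / 3)) (gamma c))) by (apply Rmult_le_pos; lra).
   destruct (H1 (c + m1/3)) as [X _]; try lra. rewrite Rabs_pos_eq; lra.
 - apply (inner d K f F gamma a b); [exact HH|lra|lra|lra|intros; apply HD; lra|lra|lra].
 - apply (Good_single _ _ _ _ _ _ _ _ _ dd); try lra. pose proof (vnorm_nonneg d (vsub (gamma dd) (gamma (dd - m2/3)))).
   assert (0 <= e1 * vnorm d (vsub (gamma dd) (gamma (dd - m2/3)))) by (apply Rmult_le_pos; lra).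
   destruct (H2 (dd - m2/3)) as [_ X]; try lra. rewrite Rabs_left; lra.
Qed.

Lemma max_closed (A : R -> Prop) u v : (forall t, A t -> u <= t <= v) -> (exists t, A t) ->
  (forall m, u <= m <= v -> (forall r, 0 < r -> exists t, A t /\ Rabs (t - m) < r) -> A m) ->
  exists w, A w /\ forall t, A t -> t <= w.
Proof. intros Hr Hne Hcl. assert (Sb : bound A) by (exists v; intros x Hx; apply Hr in Hx; lra).
 destruct (completeness A Sb Hne) as (m&Hub&Hlub). destruct Hne as (t0&Ht0).
 assert (u <= m <= v). { split. pose proof (Hr _ Ht0). pose proof (Hub _ Ht0). lra. apply Hlub. intros x Hx; apply Hr in Hx; lra. }
 exists m. split; [|exact Hub]. apply Hcl; auto. intros r Hr0.
 destruct (classic (exists t, A t /\ m - r < t)) as [(t&Ht&Ht2)|Hn].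
 - exists t; split; auto. pose proof (Hub _ Ht). rewrite Rabs_left1; lra.
 - exfalso. assert (m <= m - r); [|lra]. apply Hlub. intros x Hx. destruct (Rle_lt_dec x (m - r)); auto.
   exfalso; apply Hn; eauto. Qed.

Lemma min_closed (A : R -> Prop) u v : (forall t, A t -> u <= t <= v) -> (exists t, A t) ->
  (forall m, u <= m <= v -> (forall r, 0 < r -> exists t, A t /\ Rabs (t - m) < r) -> A m) ->
  exists w, A w /\ forall t, A t -> w <= t.
Proof. intros Hr (t0&Ht0) Hcl. destruct (max_closed (fun y => A (- y)) (-v) (-u)) as (w&Hw&Hw2).
 - intros t Ht. apply Hr in Ht. lra.
 - exists (-t0). rewrite Ropp_involutive; auto.
 - intros m Hm Hap. apply Hcl. lra. intros r Hr0. destruct (Hap r Hr0) as (t&Ht&Htm). exists (-t). split; auto.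
   replace (- t - - m) with (-(t - m)) by ring. rewrite Rabs_Ropp; auto.
 - exists (-w). split; auto. intros t Ht. assert (-t <= w); [|lra]. apply Hw2. rewrite Ropp_involutive; auto. Qed.

Lemma chop d (f : vec -> R) F gamma e1 eta c dd : 0 < eta -> c <= dd ->
  (forall u v, c <= u -> u < v -> v <= dd -> v - u < eta -> forall s, 0 < s -> Good d f F gamma e1 eta s u v) ->
  forall s, 0 < s -> Good d f F gamma e1 eta s c dd.
Proof. intros Heta Hcd Hp s Hs.
 destruct (INR_archimed (eta/2) (dd - c)) as (N&HN). lra.
 set (s' := s / (INR N + 1)). pose proof (pos_INR N). assert (Hs' : 0 < s') by (unfold s'; apply Rdiv_lt_0_compat; lra).
 assert (Hind : forall M, forall x, c <= x <= dd -> x - c <= INR M * (eta/2) -> Good d f F gamma e1 eta (INR M * s') c x).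
 { induction M; intros x Hx Hxc.
   - simpl in *. replace x with c by lra. apply Good_refl; lra.
   - rewrite S_INR in *. destruct (Rle_lt_dec (x - c) (INR M * (eta / 2))).
     + apply (Good_weaken _ _ _ _ _ _ (INR M * s')). nra. apply IHM; auto.
     + pose proof (pos_INR M). replace ((INR M + 1) * s') with (INR M * s' + s') by ring.
       apply (Good_cat _ _ _ _ _ _ _ _ _ (c + INR M * (eta/2))).
       * apply IHM; nra.
       * apply Hp; nra. }
 assert (INR N * s' <= s) by (unfold s'; apply (Rmult_le_reg_r (INR N+1)); [lra|];
   replace (INR N * (s/(INR N+1)) * (INR N+1)) with (INR N * s) by (field; lra); nra).
 apply (Good_weaken _ _ _ _ _ _ (INR N * s')); auto. apply Hind; lra. Qed.

Definition NotIn d L (x : vec) := forall e, In e L -> exists i, (i<d)%nat /\ x i <> e i.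

Lemma notin_cons d e L x : ~ (forall i, (i<d)%nat -> x i = e i) -> NotIn d L x -> NotIn d (e :: L) x.
Proof. intros H1 H2 e' [<-|He']; auto. apply not_all_ex_not in H1. destruct H1 as (i&Hi). exists i.
 apply imply_to_and in Hi. auto. Qed.

Lemma A_closed d K f F gamma a b e u v : Hyp d K f F gamma a b -> a <= u -> v <= b ->
  forall m, u <= m <= v -> (forall r, 0 < r -> exists t, (u <= t <= v /\ forall i, (i<d)%nat -> gamma t i = e i) /\ Rabs (t - m) < r) ->
  u <= m <= v /\ forall i, (i<d)%nat -> gamma m i = e i.
Proof. intros HH Ha Hb m Hm Hap. split; auto. intros i Hi. apply NNPP; intros Hne.
 assert (Hp : 0 < Rabs (gamma m i - e i)) by (apply Rabs_pos_lt; lra).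
 destruct (gam_cont d K f F gamma a b m HH ltac:(lra) _ Hp) as (r&Hr&Hc).
 destruct (Hap r Hr) as (t&(Ht&Hte)&Htm). specialize (Hc t ltac:(lra) Htm).
 pose proof (coord_le_vnorm d (vsub (gamma t) (gamma m)) i Hi). unfold vsub at 1 in H. rewrite Hte in H; auto.
 rewrite Rabs_minus_sym in H. lra. Qed.

Lemma same_point d K f F gamma a b e x y : Hyp d K f F gamma a b -> a <= x <= b -> a <= y <= b ->
  (forall i, (i<d)%nat -> gamma x i = e i) -> (forall i, (i<d)%nat -> gamma y i = e i) -> gamma x = gamma y.
Proof. intros (HK&_&_&HP1&_) Hx Hy H1 H2. apply functional_extensionality; intros i.
 destruct (Nat.lt_ge_cases i d). rewrite H1, H2; auto.
 rewrite (HK _ (HP1 x Hx) i H), (HK _ (HP1 y Hy) i H); auto. Qed.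

Lemma claim d K f F gamma a b : Hyp d K f F gamma a b -> forall L c dd, a <= c -> c < dd -> dd <= b ->
  (forall t, c < t < dd -> NotIn d L (gamma t) -> strong_deriv_at d K f F (gamma t)) ->
  forall e1 eta s, 0 < e1 -> 0 < eta -> 0 < s -> Good d f F gamma e1 eta s c dd.
Proof. intros HH L. induction L as [|e L IH]; intros c dd Ha Hcd Hb HD e1 eta s He1 Heta Hs.
 - apply (base d K f F gamma a b); auto. intros t Ht; apply HD; auto. intros e' [].
 - apply chop; auto; try lra. clear s Hs. intros u v Hu Huv Hv Hlen s Hs.
   set (A := fun t => u <= t <= v /\ forall i, (i<d)%nat -> gamma t i = e i).
   destruct (classic (exists t, A t)) as [Hne|Hno].
   + assert (HAr : forall t, A t -> u <= t <= v) by (intros t (Ht&_); auto).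
     assert (HAc : forall m, u <= m <= v -> (forall r, 0 < r -> exists t, A t /\ Rabs (t - m) < r) -> A m)
       by (intros m Hm Hap; apply (A_closed d K f F gamma a b e u v HH); auto; lra).
     destruct (min_closed A u v HAr Hne HAc) as (w1&Hw1&Hw1m).
     destruct (max_closed A u v HAr Hne HAc) as (w2&Hw2&Hw2m).
     pose proof (HAr _ Hw1). pose proof (HAr _ Hw2). pose proof (Hw1m _ Hw2).
     apply (Good_weaken _ _ _ _ _ _ (s/2 + 0 + s/2)); [lra|].
     apply (Good_cat _ _ _ _ _ _ _ _ _ w2). apply (Good_cat _ _ _ _ _ _ _ _ _ w1).
     * destruct (Req_dec u w1). subst; apply Good_refl; lra.
       apply (IH u w1); try lra. intros t Ht Hn. apply HD; try lra. apply notin_cons; auto.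
       intros Hc. assert (A t) by (split; auto; lra). apply Hw1m in H3. lra.
     * destruct (Req_dec w1 w2). rewrite H2; apply Good_refl; lra.
       apply (Good_single _ _ _ _ _ _ _ _ _ w1); try lra.
       assert (E : gamma w2 = gamma w1) by (apply (same_point d K f F gamma a b e w2 w1 HH); try lra; [apply Hw2|apply Hw1]).
       rewrite E, dot_zero_right.
       rewrite Rminus_diag, Rminus_0_r, Rabs_R0. pose proof (vnorm_nonneg d (vsub (gamma w1) (gamma w1))). nra.
       intros i Hi; unfold vsub; ring.
     * destruct (Req_dec w2 v). subst; apply Good_refl; lra.
       apply (IH w2 v); try lra. intros t Ht Hn. apply HD; try lra. apply notin_cons; auto.
       intros Hc. assert (A t) by (split; auto; lra). apply Hw2m in H3. lra.
   + apply (IH u v); try lra. intros t Ht Hn. apply HD; try lra. apply notin_cons; auto.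
     intros Hc. apply Hno. exists t. split; auto; lra.
Qed.

Lemma near2 d (F : vec -> vec) (gamma : R -> vec) a b x r eps :
  (forall z, a <= z <= b -> Rabs (z - x) < r -> norm1 d (vsub (F (gamma z)) (F (gamma x))) < eps / 2) ->
  forall s s', a <= s <= b -> a <= s' <= b -> Rabs (s - x) < r -> Rabs (s' - x) < r ->
  norm1 d (vsub (F (gamma s)) (F (gamma s'))) <= eps.
Proof. intros H s s' Hs Hs' H1 H2. eapply Rle_trans; [apply (norm1_triangle _ _ (F (gamma x)))|].
 rewrite (norm1_sym _ (F (gamma x))). pose proof (H s Hs H1). pose proof (H s' Hs' H2). lra. Qed.

Lemma unif d K f F gamma a b : Hyp d K f F gamma a b -> a <= b -> forall eps, 0 < eps ->
  exists delta, 0 < delta /\ forall s s', a <= s <= b -> a <= s' <= b -> Rabs (s - s') < delta ->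
  norm1 d (vsub (F (gamma s)) (F (gamma s'))) <= eps.
Proof. intros HH Hab eps He.
 assert (Hb : forall x, a <= x <= b -> exists r, 0 < r /\ forall z, a <= z <= b -> Rabs (z - x) < r -> norm1 d (vsub (F (gamma z)) (F (gamma x))) < eps / 2)
   by (intros x Hx; apply (Fg_cont d K f F gamma a b x HH Hx); lra).
 pose (P := fun x => exists delta, 0 < delta /\ forall s s', a <= s <= x -> a <= s' <= x -> Rabs (s - s') < delta ->
  norm1 d (vsub (F (gamma s)) (F (gamma s'))) <= eps).
 assert (Hgoal : P b); [|destruct Hgoal as (dl&Hdl&Hd); exists dl; split; auto].
 apply (real_ind a b P Hab).
 - exists 1. split; [lra|]. intros s s' Hs Hs' _. replace s with a by lra; replace s' with a by lra.
   unfold norm1, vsub. rewrite (rsum_ext _ _ (fun _ => 0)). rewrite rsum_const; lra. intros; rewrite Rminus_diag, Rabs_R0; auto.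
 - intros x Hx (dl&Hdl&Hd). destruct (Hb x ltac:(lra)) as (r&Hr&Hc). exists (x + r/2). split; [lra|].
   intros z Hz Hzb. exists (Rmin dl (r/2)). pose proof (Rmin_l dl (r/2)). pose proof (Rmin_r dl (r/2)).
   split. apply Rmin_glb_lt; lra. intros s s' Hs Hs' Hss.
   destruct (Rle_dec s x), (Rle_dec s' x). apply Hd; auto; lra.
   all: apply (near2 d F gamma a b x r eps Hc); try lra.
   all: apply Rabs_def1; apply Rabs_def2 in Hss; lra.
 - intros x Hx Hbel. destruct (Hb x ltac:(lra)) as (r&Hr&Hc). set (z := Rmax a (x - r/2)).
   assert (a <= z < x) by (unfold z; split; [apply Rmax_l|apply Rmax_lub_lt; lra]).
   assert (x - r/2 <= z) by (unfold z; apply Rmax_r).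
   destruct (Hbel z ltac:(lra)) as (dl&Hdl&Hd).
   exists (Rmin dl (r/2)). pose proof (Rmin_l dl (r/2)). pose proof (Rmin_r dl (r/2)).
   split. apply Rmin_glb_lt; lra. intros s s' Hs Hs' Hss.
   destruct (Rle_dec s z), (Rle_dec s' z). apply Hd; auto; lra.
   all: apply (near2 d F gamma a b x r eps Hc); try lra.
   all: apply Rabs_def1; apply Rabs_def2 in Hss; lra.
Qed.

Lemma dot_vsub_l d x y w : dot d (vsub x y) w = dot d x w - dot d y w.
Proof. unfold dot, vsub. rewrite <- rsum_minus. apply rsum_ext; intros; ring. Qed.

Lemma piece d (F : vec -> vec) (gamma : R -> vec) u v n t tau' tau h : TP u v n t tau' -> u <= tau <= v ->
  (forall x y, u <= x <= v -> u <= y <= v -> norm1 d (vsub (F (gamma x)) (F (gamma y))) <= h) ->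
  Rabs (dot d (F (gamma tau)) (vsub (gamma v) (gamma u)) - rs_sum d F gamma n t tau') <= h * poly_sum d gamma n t.
Proof. intros HT Htau Hh. pose proof HT as (T0&T1&_).
 assert (E : dot d (F (gamma tau)) (vsub (gamma v) (gamma u)) = rsum n (fun k => dot d (F (gamma tau)) (vsub (gamma (t (S k))) (gamma (t k))))).
 { pose proof (rsum_telescope n (fun j => dot d (F (gamma tau)) (gamma (t j)))) as Tl. cbv beta in Tl.
   rewrite (rsum_ext n _ (fun k => dot d (F (gamma tau)) (gamma (t (S k))) - dot d (F (gamma tau)) (gamma (t k)))).
   rewrite Tl, dot_vsub, T0, T1; auto. intros; apply dot_vsub. }
 rewrite E. unfold rs_sum, poly_sum. rewrite <- rsum_minus.
 eapply Rle_trans; [apply rsum_abs|]. rewrite <- rsum_scal. apply rsum_le. intros k Hk.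
 rewrite <- dot_vsub_l. eapply Rle_trans; [apply dot_le_norm1|]. apply Rmult_le_compat_r. apply vnorm_nonneg.
 apply Hh; auto. apply (TP_tag_range _ _ _ _ _ HT); auto. Qed.

Lemma sums_cat d F gamma u v w n1 t1 tau1 n2 t2 tau2 : TP u v n1 t1 tau1 -> TP v w n2 t2 tau2 ->
  rs_sum d F gamma (n1+n2) (cat_t n1 t1 t2) (cat_tau n1 tau1 tau2) = rs_sum d F gamma n1 t1 tau1 + rs_sum d F gamma n2 t2 tau2 /\
  poly_sum d gamma (n1+n2) (cat_t n1 t1 t2) = poly_sum d gamma n1 t1 + poly_sum d gamma n2 t2.
Proof. intros A1 B1. assert (E : t1 n1 = t2 O) by (destruct A1 as (_&X&_); destruct B1 as (Y&_); congruence).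
 unfold rs_sum, poly_sum. rewrite !rsum_split. split; f_equal; apply rsum_ext; intros j Hj.
 all: try (replace (S (n1 + j)) with (n1 + S j)%nat by lia; rewrite !cat_t_hi by auto; try rewrite cat_tau_hi; reflexivity).
 all: rewrite !cat_t_lo by lia; try rewrite cat_tau_lo by lia; reflexivity. Qed.

Theorem mainTheorem3 (d : nat) (K : vec -> Prop) (f : vec -> R) (F : vec -> vec)
  (gamma : R -> vec) (a b : R) :
  (forall x, K x -> in_Rd d x) ->
  compact_set d K ->
  cont_on_scalar d K f ->
  cont_on_vec d K F ->
  a < b ->
  is_path d K gamma a b ->
  rectifiable d gamma a b ->
  (exists E : list vec, forall t, a <= t <= b ->
      (forall e, In e E -> exists i, (i < d)%nat /\ gamma t i <> e i) ->
      strong_deriv_at d K f F (gamma t)) ->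
  path_integral_is d F gamma a b (f (gamma b) - f (gamma a)).
Proof.
 intros HK _ Hf HF Hab Hp (M&HM) (E&HE). assert (HH : Hyp d K f F gamma a b) by (repeat split; auto; apply Hp).
 intros eps Heps. set (M' := Rabs M + 1). assert (HM' : 0 < M') by (unfold M'; pose proof (Rabs_pos M); lra).
 set (h := eps / (4 * M')). assert (Hh : 0 < h) by (unfold h; apply Rdiv_lt_0_compat; lra).
 destruct (unif d K f F gamma a b HH ltac:(lra) h Hh) as (dl&Hdl&Hu).
 exists dl. split; auto. intros n t tau (Hn&T0&Tn&Tinc) Hmesh Htag.
 assert (HT : TP a b n t tau) by (split; [auto|split; [auto|split; [auto|exact Htag]]]).
 set (s := eps / (4 * (INR n + 1))). pose proof (pos_INR n).
 assert (Hs : 0 < s) by (unfold s; apply Rdiv_lt_0_compat; lra).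
 assert (Hind : forall m, (m <= n)%nat -> exists nR tR tauR, TP a (t m) nR tR tauR /\
   Rabs (rsum m (fun j => dot d (F (gamma (tau j))) (vsub (gamma (t (S j))) (gamma (t j)))) - rs_sum d F gamma nR tR tauR) <= h * poly_sum d gamma nR tR /\
   Rabs (rs_sum d F gamma nR tR tauR - (f (gamma (t m)) - f (gamma a))) <= h * poly_sum d gamma nR tR + INR m * s).
 { induction m; intros Hm.
   - exists O, (fun _ => a), (fun _ => a). split; [repeat split; auto; intros; lia|].
     unfold rs_sum, poly_sum; simpl. rewrite T0. replace (0 - (f (gamma a) - f (gamma a))) with 0 by ring. rewrite Rminus_0_r, Rabs_R0. split; lra.
   - destruct (IHm ltac:(lia)) as (nR&tR&tauR&R1&R2&R3).
     pose proof (TP_range _ _ _ _ _ HT m ltac:(lia)). pose proof (TP_range _ _ _ _ _ HT (S m) ltac:(lia)).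
     pose proof (Tinc m ltac:(lia)).
     destruct (claim d K f F gamma a b HH E (t m) (t (S m))) with (e1 := h) (eta := dl) (s := s)
       as (nQ&tQ&tauQ&Q1&Q2&Q3); try lra.
     { intros t' Ht' Hn'. apply HE; auto. lra. }
     exists (nR + nQ)%nat, (cat_t nR tR tQ), (cat_tau nR tauR tauQ).
     destruct (sums_cat d F gamma _ _ _ _ _ _ _ _ _ R1 Q1) as (S1&S2). rewrite S1, S2.
     split; [eapply TP_cat; eauto|]. simpl rsum. rewrite S_INR.
     assert (P : Rabs (dot d (F (gamma (tau m))) (vsub (gamma (t (S m))) (gamma (t m))) - rs_sum d F gamma nQ tQ tauQ) <= h * poly_sum d gamma nQ tQ).
     { apply (piece _ _ _ _ _ _ _ _ _ _ Q1). apply Htag; lia. intros x y Hx Hy. apply Hu; try lra.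
       specialize (Hmesh m ltac:(lia)). apply Rabs_def1; lra. }
     split.
     + match goal with |- Rabs ?X <= _ => replace X with ((rsum m (fun j => dot d (F (gamma (tau j))) (vsub (gamma (t (S j))) (gamma (t j)))) - rs_sum d F gamma nR tR tauR) + (dot d (F (gamma (tau m))) (vsub (gamma (t (S m))) (gamma (t m))) - rs_sum d F gamma nQ tQ tauQ)) by ring end.
       eapply Rle_trans; [apply Rabs_triang|]. lra.
     + match goal with |- Rabs ?X <= _ => replace X with ((rs_sum d F gamma nR tR tauR - (f (gamma (t m)) - f (gamma a))) + (rs_sum d F gamma nQ tQ tauQ - (f (gamma (t (S m))) - f (gamma (t m))))) by ring end.
       eapply Rle_trans; [apply Rabs_triang|]. lra. }
 destruct (Hind n ltac:(lia)) as (nR&tR&tauR&R1&R2&R3). rewrite Tn in R1, R3.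
 assert (Hps : poly_sum d gamma nR tR <= M').
 { assert (Hpart : is_partition a b nR tR).
   { destruct R1 as (A0&A1&A2&A3). repeat split; auto. destruct nR; [|lia]. exfalso. rewrite A0 in A1. lra. }
   pose proof (HM _ _ Hpart). unfold M'. pose proof (Rle_abs M). lra. }
 pose proof (poly_sum_nonneg d gamma nR tR).
 assert (h * poly_sum d gamma nR tR <= eps/4).
 { apply (Rle_trans _ (h * M')); [apply Rmult_le_compat_l; lra|unfold h; right; field; lra]. }
 assert (INR n * s <= eps/4).
 { unfold s. apply (Rmult_le_reg_r (4 * (INR n + 1))); [lra|].
   replace (INR n * (eps / (4 * (INR n + 1))) * (4 * (INR n + 1))) with (INR n * eps) by (field; lra). nra. }
 unfold rs_sum. match goal with |- Rabs ?X < _ => replace X with ((rsum n (fun j => dot d (F (gamma (tau j))) (vsub (gamma (t (S j))) (gamma (t j)))) - rs_sum d F gamma nR tR tauR) + (rs_sum d F gamma nR tR tauR - (f (gamma b) - f (gamma a)))) by ring end.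
 eapply Rle_lt_trans; [apply Rabs_triang|]. lra.
Qed.
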